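(* Let $\mathcal{G}=(G,\odot,\leq)$ be a real continuous Alo-group with $G$ an open interval of $\mathbb{R}$, and let $\tilde A=([a_{ij}^-,a_{ij}^+])$ be an $n\times n$ $[\mathcal{G}]$-reciprocal IPCM with associated matrices $L=(l_{ij})$, $R=(r_{ij})$. The following are equivalent: (1) $\tilde A$ is Liu's $[\mathcal{G}]$-consistent, i.e. $l_{ik}=l_{ij}\odot l_{jk}$ and $r_{ik}=r_{ij}\odot r_{jk}$ for all $i,j,k\in\{1,\dots,n\}$; (2) $l_{ik}=l_{ij}\odot l_{jk}$ and $r_{ik}=r_{ij}\odot r_{jk}$ for all $i<j<k$; (3) $\tilde a_{ik}=\tilde a_{ij}\odot_{[G]}\tilde a_{jk}$ for all $i<j<k$.
   Context: An Alo-group $(G,\odot,\leq)$ is an Abelian group with identity $e$ and a weak order $\leq$ such that $a\leq b\Rightarrow a\odot c\leq b\odot c$; real means $G\subseteq\mathbb{R}$ with usual order, continuous means $\odot$ is continuous. $[G]=\{[a^-,a^+]: a^-,a^+\in G,\ a^-\leq a^+\}$; $\tilde a^{(-1)}=[(a^+)^{(-1)},(a^-)^{(-1)}]$; $\tilde a\odot_{[G]}\tilde b=\{a\odot b: a\in\tilde a,b\in\tilde b\}$. An IPCM is an $n\times n$ matrix with entries in $[G]$; $[\mathcal{G}]$-reciprocal means $\tilde a_{ji}=\tilde a_{ij}^{(-1)}$ for all $i,j$. $L,R$ are defined by $l_{ij}=a_{ij}^-$ if $i<j$, $e$ if $i=j$, $a_{ij}^+$ if $i>j$; and $r_{ij}=a_{ij}^+$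 if $i<j$, $e$ if $i=j$, $a_{ij}^-$ if $i>j$. *)

(* Defs.v *)
From HB Require Import structures.
From mathcomp Require Import all_boot all_order all_algebra.
From mathcomp Require Import all_classical all_reals all_analysis.
Set Implicit Arguments. Unset Strict Implicit. Unset Printing Implicit Defensive.
Import Order.TTheory GRing.Theory Num.Theory.
Import numFieldNormedType.Exports.
Local Open Scope classical_set_scope.
Local Open Scope ring_scope.

(* The operation is given as a total
   function R -> R -> R; all axioms are only required on G. *)
Definition real_cont_alo_group (R : realType) (G : set R) (op : R -> R -> R)
    (e : R) (inv : R -> R) : Prop :=
  (exists a b : \bar R, G = [set x | (a < x%:E)%E /\ (x%:E < b)%E]) /\
  [/\ (forall x y, G x -> G y -> G (op x y)),
      (forall x y z, G x -> G y -> G z -> op x (op y z) = op (op x y) z),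
      (forall x y, G x -> G y -> op x y = op y x),
      G e /\ (forall x, G x -> op x e = x) &
      (forall x, G x -> G (inv x) /\ op x (inv x) = e)] /\
  (forall a b c, G a -> G b -> G c -> a <= b -> op a c <= op b c) /\
  {within G `*` G, continuous (fun p : R * R => op p.1 p.2)}.

Definition itv (R : realType) (a b : R) : set R := [set x | a <= x <= b].

Definition itv_op (R : realType) (op : R -> R -> R) (A B : set R) : set R :=
  [set z | exists2 x, A x & exists2 y, B y & z = op x y].

(* An n x n IPCM with entries in [G], entry (i,j) = [am i j, ap i j]. *)
Definition is_IPCM (R : realType) (G : set R) n (am ap : 'I_n -> 'I_n -> R) :=
  forall i j, [/\ G (am i j), G (ap i j) & am i j <= ap i j].

(* [G]-reciprocity: ã_ji = ã_ij^(-1) = [(a_ij^+)^(-1), (a_ij^-)^(-1)]. *)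
Definition G_reciprocal (R : realType) (inv : R -> R) n
    (am ap : 'I_n -> 'I_n -> R) :=
  forall i j, am j i = inv (ap i j) /\ ap j i = inv (am i j).

Definition Lmat (R : realType) (e : R) n (am ap : 'I_n -> 'I_n -> R)
    (i j : 'I_n) : R :=
  if (i < j)%N then am i j else if i == j then e else ap i j.

Definition Rmat (R : realType) (e : R) n (am ap : 'I_n -> 'I_n -> R)
    (i j : 'I_n) : R :=
  if (i < j)%N then ap i j else if i == j then e else am i j.

(* Main.v *)
Require Import Defs.
From mathcomp Require Import all_boot all_order all_algebra.
From mathcomp Require Import all_classical all_reals all_analysis.
From mathcomp Require Import zify.
Import Order.TTheory GRing.Theory Num.Theory.
Import numFieldNormedType.Exports.
Local Open Scope classical_set_scope.
Local Open Scope ring_scope.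

Theorem proposition10 (R : realType) (G : set R) (op : R -> R -> R) (e : R)
    (inv : R -> R) (n : nat) (am ap : 'I_n -> 'I_n -> R) :
  real_cont_alo_group G op e inv ->
  is_IPCM G am ap ->
  G_reciprocal inv am ap ->
  let L := Lmat e am ap in
  let Rm := Rmat e am ap in
  [<-> (* (1) Liu's [G]-consistency *)
       (forall i j k : 'I_n,
          L i k = op (L i j) (L j k) /\ Rm i k = op (Rm i j) (Rm j k));
       (* (2) *)
       (forall i j k : 'I_n, (i < j)%N -> (j < k)%N ->
          L i k = op (L i j) (L j k) /\ Rm i k = op (Rm i j) (Rm j k));
       (* (3) *)
       (forall i j k : 'I_n, (i < j)%N -> (j < k)%N ->
          itv (am i k) (ap i k) =
          itv_op op (itv (am i j) (ap i j)) (itv (am j k) (ap j k)))].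
Proof.
move=> [[a [b HG]] [[Gop Gassoc Gcomm [Ge Gunit] Ginv] [Gmono _]]] HI Hrec L Rm.
have conv : forall x y z, G x -> G y -> x <= z -> z <= y -> G z.
  move=> x y z; rewrite HG /= => -[ax _] [_ yb] xz zy; split.
    by apply: (lt_le_trans ax); rewrite lee_fin.
  by apply: (le_lt_trans _ yb); rewrite lee_fin.
have eL : forall x, G x -> op e x = x by move=> x Gx; rewrite Gcomm // Gunit.
have solve : forall x y z, G x -> G y -> G z -> (x = op y z) <-> (op (inv y) x = z).
  move=> x y z Gx Gy Gz; have [Giy Hy] := Ginv y Gy; split => [->|<-].
    by rewrite Gassoc // (Gcomm (inv y) y) // Hy eL.
  by rewrite Gassoc // Hy eL.
have inve : inv e = e.
  have [Gie H] := Ginv e Ge; by rewrite -{2}H eL.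
have mono2 : forall x y z, G x -> G y -> G z -> x <= y -> op z x <= op z y.
  by move=> x y z Gx Gy Gz xy; rewrite (Gcomm z x) // (Gcomm z y) //; apply: Gmono.
have can1 : forall x y, G x -> G y -> op (inv x) (op x y) = y.
  by move=> x y Gx Gy; apply/(solve _ _ _ (Gop _ _ Gx Gy) Gx Gy).
have can2 : forall x y, G x -> G y -> op x (op (inv x) y) = y.
  move=> x y Gx Gy; have Gi := (Ginv x Gx).1.
  by symmetry; apply/(solve _ _ _ Gy Gx (Gop _ _ Gi Gy)).
have can3 : forall x y, G x -> G y -> op (op y x) (inv x) = y.
  move=> x y Gx Gy; have Gi := (Ginv x Gx).1.
  rewrite (Gcomm (op y x) (inv x)) //; last exact: Gop.
  by rewrite (Gcomm y x) // can1.
have itvlem : forall a1 a2 b1 b2, G a1 -> G a2 -> G b1 -> G b2 -> a1 <= a2 -> b1 <= b2 ->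
    itv (op a1 b1) (op a2 b2) = itv_op op (itv a1 a2) (itv b1 b2).
  move=> a1 a2 b1 b2 Ga1 Ga2 Gb1 Gb2 ha hb; apply/seteqP; split.
    move=> z /andP[h1 h2].
    have Gz : G z by apply: (conv _ _ _ (Gop _ _ Ga1 Gb1) (Gop _ _ Ga2 Gb2)).
    have Gib1 := (Ginv b1 Gb1).1; have Gia2 := (Ginv a2 Ga2).1.
    case: (leP z (op a2 b1)) => hz.
      exists (op z (inv b1)).
        apply/andP; split.
          by rewrite -{1}(can3 b1 a1) //; apply: Gmono => //; apply: Gop.
        by rewrite -{1}(can3 b1 a2) //; apply: Gmono => //; apply: Gop.
      exists b1; first by rewrite /itv /= lexx hb.
      rewrite (Gcomm z (inv b1)) // (Gcomm (op (inv b1) z) b1) ?can2 //; exact: Gop.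
    exists a2; first by rewrite /itv /= lexx ha.
    exists (op (inv a2) z); last by rewrite can2.
    apply/andP; split.
      by rewrite -{1}(can1 a2 b1) //; apply: mono2 => //; [apply: Gop| apply: ltW].
    by rewrite -{1}(can1 a2 b2) //; apply: mono2 => //; apply: Gop.
  move=> z [x /andP[hx1 hx2] [y /andP[hy1 hy2] ->]].
  have Gx : G x by apply: (conv _ _ _ Ga1 Ga2).
  have Gy : G y by apply: (conv _ _ _ Gb1 Gb2).
  apply/andP; split.
    apply: (le_trans (Gmono _ _ _ Ga1 Gx Gb1 hx1)); exact: mono2.
  apply: (le_trans (Gmono _ _ _ Gx Ga2 Gy hx2)); exact: mono2.
have itveq : forall c1 c2 d1 d2 : R, c1 <= c2 -> itv c1 c2 = itv d1 d2 -> c1 = d1 /\ c2 = d2.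
  move=> c1 c2 d1 d2 hc E.
  have : itv d1 d2 c1 by rewrite -E /itv /= lexx hc.
  have : itv d1 d2 c2 by rewrite -E /itv /= lexx hc.
  rewrite /itv /= => /andP[h1 h2] /andP[h3 h4].
  have : itv c1 c2 d1 by rewrite E /itv /= lexx (le_trans h3 h4).
  have : itv c1 c2 d2 by rewrite E /itv /= lexx (le_trans h3 h4).
  rewrite /itv /= => /andP[h5 h6] /andP[h7 h8].
  by split; apply/eqP; rewrite eq_le ?h3 ?h7 ?h2 ?h6.
have gen : forall M : 'I_n -> 'I_n -> R, (forall i j, G (M i j)) -> (forall i, M i i = e) ->
    (forall i j, M j i = inv (M i j)) ->
    (forall i j k : 'I_n, (i < j)%N -> (j < k)%N -> M i k = op (M i j) (M j k)) ->
    forall i j k, M i k = op (M i j) (M j k).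
  move=> M GM Mii Mji Hs.
  have sw12 : forall i j k, M i k = op (M i j) (M j k) -> M j k = op (M j i) (M i k).
    move=> i j k H; have H' := (solve _ _ _ (GM i k) (GM i j) (GM j k)).1 H.
    by rewrite (Mji i j) H'.
  have sw23 : forall i j k, M i k = op (M i j) (M j k) -> M i j = op (M i k) (M k j).
    move=> i j k H; rewrite (Gcomm _ _ (GM i j) (GM j k)) in H.
    have H' := (solve _ _ _ (GM i k) (GM j k) (GM i j)).1 H.
    by rewrite Gcomm // (Mji j k) H'.
  move=> i j k.
  case: (eqVneq i j) => [->|nij]; first by rewrite Mii eL.
  case: (eqVneq j k) => [->|njk]; first by rewrite Mii Gunit.
  case: (eqVneq i k) => [<-|nik]; first by rewrite Mii (Mji i j) (Ginv _ (GM i j)).2.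
  have nij' : (i != j :> nat) := nij.
  have njk' : (j != k :> nat) := njk.
  have nik' : (i != k :> nat) := nik.
  have H1 : (i < j)%N \/ (j < i)%N by lia.
  have H2 : (j < k)%N \/ (k < j)%N by lia.
  have H3 : (i < k)%N \/ (k < i)%N by lia.
  case: H1 => hij; case: H2 => hjk; case: H3 => hik; try (exfalso; lia).
  - exact: (Hs).
  - apply: (sw23); exact: (Hs).
  - apply: (sw23); apply: (sw12); exact: (Hs).
  - apply: (sw12); exact: (Hs).
  - apply: (sw12); apply: (sw23); exact: (Hs).
  - apply: (sw12); apply: (sw23); apply: (sw12); exact: (Hs).
have GL : forall i j, G (L i j).
  move=> i j; rewrite /L /Lmat; case: ifP => _; first by case: (HI i j).
  by case: ifP => _ //; case: (HI i j).
have GR : forall i j, G (Rm i j).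
  move=> i j; rewrite /Rm /Rmat; case: ifP => _; first by case: (HI i j).
  by case: ifP => _ //; case: (HI i j).
have Lii : forall i, L i i = e by move=> i; rewrite /L /Lmat ltnn eqxx.
have Rii : forall i, Rm i i = e by move=> i; rewrite /Rm /Rmat ltnn eqxx.
have Lji : forall i j, L j i = inv (L i j).
  move=> i j; rewrite /L /Lmat; case: (ltngtP i j) => h.
  - rewrite eq_sym -val_eqE /= (ltn_eqF h).
    exact: (Hrec i j).2.
  - rewrite -val_eqE /= (gtn_eqF h); exact: (Hrec i j).1.
  - by move/val_inj: h => ->; rewrite eqxx inve.
have Rji : forall i j, Rm j i = inv (Rm i j).
  move=> i j; rewrite /Rm /Rmat; case: (ltngtP i j) => h.
  - rewrite eq_sym -val_eqE /= (ltn_eqF h).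
    exact: (Hrec i j).1.
  - rewrite -val_eqE /= (gtn_eqF h); exact: (Hrec i j).2.
  - by move/val_inj: h => ->; rewrite eqxx inve.
have Lpos : forall i k : 'I_n, (i < k)%N -> L i k = am i k /\ Rm i k = ap i k.
  by move=> i k h; rewrite /L /Rm /Lmat /Rmat h.
have d23 : (forall i j k : 'I_n, (i < j)%N -> (j < k)%N ->
          L i k = op (L i j) (L j k) /\ Rm i k = op (Rm i j) (Rm j k)) ->
       (forall i j k : 'I_n, (i < j)%N -> (j < k)%N ->
          itv (am i k) (ap i k) =
          itv_op op (itv (am i j) (ap i j)) (itv (am j k) (ap j k))).
  move=> H i j k hij hjk; have [E1 E2] := H i j k hij hjk.
  have hik : (i < k)%N := ltn_trans hij hjk.
  move: E1 E2; rewrite (Lpos _ _ hij).1 (Lpos _ _ hij).2 (Lpos _ _ hjk).1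
    (Lpos _ _ hjk).2 (Lpos _ _ hik).1 (Lpos _ _ hik).2 => -> ->.
  by case: (HI i j) => ? ? ?; case: (HI j k) => ? ? ?; apply: itvlem.
have d32 : (forall i j k : 'I_n, (i < j)%N -> (j < k)%N ->
          itv (am i k) (ap i k) =
          itv_op op (itv (am i j) (ap i j)) (itv (am j k) (ap j k))) ->
       (forall i j k : 'I_n, (i < j)%N -> (j < k)%N ->
          L i k = op (L i j) (L j k) /\ Rm i k = op (Rm i j) (Rm j k)).
  move=> H i j k hij hjk; have E := H i j k hij hjk.
  have hik : (i < k)%N := ltn_trans hij hjk.
  rewrite (Lpos _ _ hij).1 (Lpos _ _ hij).2 (Lpos _ _ hjk).1
    (Lpos _ _ hjk).2 (Lpos _ _ hik).1 (Lpos _ _ hik).2.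
  case: (HI i j) => ? ? ?; case: (HI j k) => ? ? ?; case: (HI i k) => ? ? hle.
  rewrite -itvlem // in E.
  exact: itveq hle E.
tfae.
- by move=> H i j k _ _; exact: H.
- exact: d23.
- move=> H3; have H2 := d32 H3; move=> i j k; split.
    apply: (gen L GL Lii Lji) => i' j' k' h1 h2; exact: (H2 i' j' k' h1 h2).1.
  apply: (gen Rm GR Rii Rji) => i' j' k' h1 h2; exact: (H2 i' j' k' h1 h2).2.
Qed.
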